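(* Let $H$ satisfy Condition (H). For every $u\in(0,\partial_+)$ there is $v\in(u,\partial_+)$ such that for all $t\ge0$ and all $(x,p)\in(-v,v)\times\mathbb R$ with $t<t_{x,p}$ and $X_t^{x,p}\in(-u,u)$, one has $X_s^{x,p}\in(-v,v)$ for all $s\in[0,t]$.
   Context: $\mathbb K$ is either $\mathbb R$ or $[-1,1]$, with interior $\mathbb K^\circ$; $\partial_-=-\infty,\partial_+=+\infty$ if $\mathbb K=\mathbb R$ and $\partial_-=-1,\partial_+=1$ if $\mathbb K=[-1,1]$. The Lagrangian is $\mathcal L(x,v)=\sup_p(pv-H(x,p))$. The Hamilton equations are $\dot X=\partial_pH(X,P)$, $\dot P=-\partial_xH(X,P)$; $(X_s^{x,p},P_s^{x,p})$ is the solution from $(x,p)$ on its maximal interval of existence $[0,t_{x,p})$. Condition (H) on $H:\mathbb K\times\mathbb R\to\mathbb R$: $H(x,0)=0$ for all $x$, and (H1) $H$ is $C^2$ with $\partial_p^2H>0$ on $\mathbb K\times\mathbb R$; if $\mathbb K=[-1,1]$, $H$ is the restriction of a $C^2$ function on $(-1-\epsilon,1+\epsilon)\times\mathbb R$ for some $\epsilon>0$. (H2) for every compact $K\subseteq\mathbb K^\circ$ there is $\theta_K:[0,\infty)\to[0,\infty)$ with $\theta_K(r)/r\to\infty$ as $r\to\infty$; for every $M\ge0$ a constant $k_M$ with $\theta_K(r+m)\le k_M(1+\theta_K(r))$ for all $m\in[0,M]$, $r\ge0$; constants $c_K,C_K$ with $\mathcal L(x,v)\ge\theta_K(|v|)-c_K$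 and $|\partial_x\mathcal L(x,v)|+|\partial_v\mathcal L(x,v)|\le C_K\theta_K(|v|)$ for all $x\in K,v\in\mathbb R$. (H3) for each compact $K\subseteq\mathbb K^\circ$, $\lim_{|p|\to\infty}\inf_{x\in K}H(x,p)/|p|=\infty$; if $\mathbb K=[-1,1]$ moreover $\lim_{p\to\infty}H(-1,p)/p=\infty$ and $\lim_{p\to-\infty}H(1,p)/(-p)=\infty$. (H4) $\lim_{x\to\partial_-}\operatorname{argmin}_pH(x,p)=-\infty$ and $\lim_{x\to\partial_+}\operatorname{argmin}_pH(x,p)=+\infty$. (H5) there are $(y_n^+,q_n^+)\in\mathbb K^\circ\times(0,\infty)$ converging to $(\partial_+,+\infty)$ with $\partial_pH(y_n^+,q)\ge0$ for $q\ge q_n^+$ and $-\partial_xH(y,q_n^+)\ge0$ for $y\ge y_n^+$, and $(y_n^-,q_n^-)\in\mathbb K^\circ\times(-\infty,0)$ converging to $(\partial_-,-\infty)$ with $\partial_pH(y_n^-,q)\le0$ for $q\le q_n^-$ and $-\partial_xH(y,q_n^-)\le0$ for $y\le y_n^-$. *)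

(* Defs.v *)
From Stdlib Require Import Reals Lra ClassicalEpsilon.
Open Scope R_scope.

(* The two possible state spaces: K = R or K = [-1,1]. *)
Inductive Kdom : Type := KR | KI.

Definition inK (k : Kdom) (x : R) : Prop :=
  match k with KR => True | KI => -1 <= x <= 1 end.

Definition inKint (k : Kdom) (x : R) : Prop :=
  match k with KR => True | KI => -1 < x < 1 end.

(* x < ∂_+  (∂_+ = +∞ or 1) *)
Definition lt_dplus (k : Kdom) (x : R) : Prop :=
  match k with KR => True | KI => x < 1 end.

(* "x is in a neighbourhood of ∂_- inside K°", parametrised by a ∈ K°:
   K = R : x < a ;  K = [-1,1] : -1 < x < a *)
Definition near_dminus (k : Kdom) (a x : R) : Prop :=
  match k with KR => x < a | KI => -1 < x < a end.
Definition near_dplus (k : Kdom) (a x : R) : Prop :=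
  match k with KR => a < x | KI => a < x < 1 end.

Definition cv_dplus (k : Kdom) (y : nat -> R) : Prop :=
  match k with KR => cv_infty y | KI => Un_cv y 1 end.
Definition cv_dminus (k : Kdom) (y : nat -> R) : Prop :=
  match k with KR => cv_infty (fun n => - y n) | KI => Un_cv y (-1) end.

Definition strip (k : Kdom) (eps x : R) : Prop :=
  match k with KR => True | KI => -1 - eps < x < 1 + eps end.

Definition cont2 (f : R -> R -> R) (x p : R) : Prop :=
  forall e, 0 < e -> exists d, 0 < d /\
    forall x' p', Rabs (x' - x) < d -> Rabs (p' - p) < d ->
      Rabs (f x' p' - f x p) < e.

Definition C2_on (U : R -> Prop) (H Hx Hp Hxx Hxp Hpx Hpp : R -> R -> R) : Prop :=
  forall x p, U x ->
    derivable_pt_lim (fun y => H y p) x (Hx x p) /\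
    derivable_pt_lim (fun q => H x q) p (Hp x p) /\
    derivable_pt_lim (fun y => Hx y p) x (Hxx x p) /\
    derivable_pt_lim (fun q => Hx x q) p (Hxp x p) /\
    derivable_pt_lim (fun y => Hp y p) x (Hpx x p) /\
    derivable_pt_lim (fun q => Hp x q) p (Hpp x p) /\
    cont2 H x p /\ cont2 Hx x p /\ cont2 Hp x p /\
    cont2 Hxx x p /\ cont2 Hxp x p /\ cont2 Hpx x p /\ cont2 Hpp x p.

(* Lagrangian L(x,v) = sup_p (p v - H(x,p)) (0 if the sup is not finite;
   under Condition (H) it is finite for x ∈ K°). *)
Definition lag_set (H : R -> R -> R) (x v : R) : R -> Prop :=
  fun y => exists p, y = p * v - H x p.

Definition Lag (H : R -> R -> R) (x v : R) : R :=
  match excluded_middle_informative (exists l, is_lub (lag_set H x v) l) with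
  | left h => proj1_sig (constructive_indefinite_description _ h)
  | right _ => 0
  end.

Definition compact_in_int (k : Kdom) (C : R -> Prop) : Prop :=
  compact C /\ (forall x, C x -> inKint k x).

Definition H1 (k : Kdom) (H : R -> R -> R) : Prop :=
  exists eps, 0 < eps /\
  exists Hx Hp Hxx Hxp Hpx Hpp : R -> R -> R,
    C2_on (strip k eps) H Hx Hp Hxx Hxp Hpx Hpp /\
    (forall x p, inK k x -> Hpp x p > 0).

Definition H2 (k : Kdom) (H : R -> R -> R) : Prop :=
  forall C, compact_in_int k C ->
  exists theta : R -> R,
    (forall r, 0 <= r -> 0 <= theta r) /\
    (forall M, exists R0, forall r, R0 < r -> M < theta r / r) /\
    (forall M, 0 <= M -> exists kM, forall m r, 0 <= m <= M -> 0 <= r ->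
        theta (r + m) <= kM * (1 + theta r)) /\
    exists cK CK,
      forall x v, C x ->
        Lag H x v >= theta (Rabs v) - cK /\
        exists a b,
          derivable_pt_lim (fun y => Lag H y v) x a /\
          derivable_pt_lim (fun w => Lag H x w) v b /\
          Rabs a + Rabs b <= CK * theta (Rabs v).

Definition H3 (k : Kdom) (H : R -> R -> R) : Prop :=
  (forall C, compact_in_int k C ->
     forall M, exists R0, forall p x, R0 < Rabs p -> C x -> M <= H x p / Rabs p) /\
  match k with
  | KR => True
  | KI =>
      (forall M, exists R0, forall p, R0 < p -> M <= H (-1) p / p) /\
      (forall M, exists R0, forall p, p < R0 -> M <= H 1 p / (- p))
  end.

Definition is_argmin (H : R -> R -> R) (x q : R) : Prop :=
  forall p, H x q <= H x p.

Definition H4 (k : Kdom) (H : R -> R -> R) : Prop :=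
  (forall M, exists a, inKint k a /\ forall x q,
     near_dminus k a x -> is_argmin H x q -> q < - M) /\
  (forall M, exists a, inKint k a /\ forall x q,
     near_dplus k a x -> is_argmin H x q -> M < q).

Definition H5 (k : Kdom) (H : R -> R -> R) : Prop :=
  (exists y q : nat -> R,
     (forall n, inKint k (y n) /\ 0 < q n) /\
     cv_dplus k y /\ cv_infty q /\
     (forall n r l, q n <= r ->
        derivable_pt_lim (fun r' => H (y n) r') r l -> l >= 0) /\
     (forall n z l, inK k z -> y n <= z ->
        derivable_pt_lim (fun z' => H z' (q n)) z l -> - l >= 0)) /\
  (exists y q : nat -> R,
     (forall n, inKint k (y n) /\ q n < 0) /\
     cv_dminus k y /\ cv_infty (fun n => - q n) /\
     (forall n r l, r <= q n ->
        derivable_pt_lim (fun r' => H (y n) r') r l -> l <= 0) /\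
     (forall n z l, inK k z -> z <= y n ->
        derivable_pt_lim (fun z' => H z' (q n)) z l -> - l <= 0)).

Definition condH (k : Kdom) (H : R -> R -> R) : Prop :=
  (forall x, inK k x -> H x 0 = 0) /\
  H1 k H /\ H2 k H /\ H3 k H /\ H4 k H /\ H5 k H.

Definition deriv_within (a b : R) (f : R -> R) (s l : R) : Prop :=
  forall e, 0 < e -> exists d, 0 < d /\
    forall h, h <> 0 -> Rabs h < d -> a <= s + h <= b ->
      Rabs ((f (s + h) - f s) / h - l) < e.

(* (X,P) solves Hamilton's equations on [0,t] in K × R:
   X' = ∂_p H(X,P), P' = -∂_x H(X,P). *)
Definition hamilton_sol (k : Kdom) (H : R -> R -> R) (t : R) (X P : R -> R) : Prop :=
  forall s, 0 <= s <= t ->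
    inK k (X s) /\
    exists a b,
      deriv_within 0 t X s a /\ deriv_within 0 t P s b /\
      derivable_pt_lim (fun q => H (X s) q) (P s) a /\
      derivable_pt_lim (fun y => H y (P s)) (X s) (- b).

(* Main.v *)
Require Import Defs.
From Stdlib Require Import Reals Lra Lia Classical.
Open Scope R_scope.

Definition wcont (lo hi : R) (f : R -> R) : Prop :=
  forall s, lo <= s <= hi -> forall e, 0 < e -> exists d, 0 < d /\
    forall s', lo <= s' <= hi -> Rabs (s' - s) < d -> Rabs (f s' - f s) < e.

Definition clamp (a b s : R) := Rmin b (Rmax a s).

Lemma clamp_in a b s : a <= b -> a <= clamp a b s <= b.
Proof. intros; unfold clamp, Rmin, Rmax; repeat destruct Rle_dec; lra. Qed.

Lemma clamp_id a b s : a <= s <= b -> clamp a b s = s.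
Proof. intros; unfold clamp, Rmin, Rmax; repeat destruct Rle_dec; lra. Qed.

Lemma clamp_lip a b s s' : a <= b -> Rabs (clamp a b s - clamp a b s') <= Rabs (s - s').
Proof.
  intros; unfold clamp, Rmin, Rmax, Rabs; repeat destruct Rle_dec; repeat destruct Rcase_abs; lra.
Qed.

Lemma wcont_clamp lo hi f : lo <= hi -> wcont lo hi f ->
  forall x, continuity_pt (fun s => f (clamp lo hi s)) x.
Proof.
  intros Hle Hc x. unfold continuity_pt, continue_in, limit1_in, limit_in. intros e He.
  destruct (Hc (clamp lo hi x) (clamp_in _ _ _ Hle) e He) as [d [Hd Hd']].
  exists d; split; [lra|]. intros y [_ Hy]. simpl in *. unfold R_dist in *.
  apply Hd'. apply clamp_in; auto. eapply Rle_lt_trans. apply clamp_lip; auto. exact Hy.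
Qed.

Lemma wcont_max lo hi f : lo <= hi -> wcont lo hi f ->
  exists r, lo <= r <= hi /\ forall s, lo <= s <= hi -> f s <= f r.
Proof.
  intros Hle Hc.
  destruct (continuity_ab_maj (fun s => f (clamp lo hi s)) lo hi Hle
     (fun c _ => wcont_clamp lo hi f Hle Hc c)) as [M [HM HM']].
  exists M; split; auto. intros s Hs. specialize (HM s Hs). simpl in HM.
  rewrite !clamp_id in HM; auto.
Qed.

Lemma wcont_sub lo hi a b f : wcont lo hi f -> lo <= a -> b <= hi -> wcont a b f.
Proof.
  intros Hc Ha Hb s Hs e He. destruct (Hc s ltac:(lra) e He) as [d [Hd Hd']].
  exists d; split; auto. intros s' Hs' Hss. apply Hd'; auto; lra.
Qed.

Lemma dpl_local f g x l d : 0 < d -> (forall y, Rabs (y - x) < d -> f y = g y) ->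
  derivable_pt_lim f x l -> derivable_pt_lim g x l.
Proof.
  intros Hd Heq H e He. destruct (H e He) as [del Hdel].
  assert (Hp : 0 < Rmin del d) by (apply Rmin_pos; [apply cond_pos|lra]).
  exists (mkposreal _ Hp). intros h Hh Hhd. simpl in Hhd.
  assert (E1 : f (x + h) = g (x + h)) by (apply Heq; replace (x + h - x) with h by ring;
     eapply Rlt_le_trans; [exact Hhd| apply Rmin_r]).
  assert (E2 : f x = g x) by (apply Heq; replace (x - x) with 0 by ring; rewrite Rabs_R0; lra).
  rewrite <- E1, <- E2. apply Hdel; auto. eapply Rlt_le_trans; [exact Hhd| apply Rmin_l].
Qed.

Lemma mvt_lb f df a b K : a < b -> wcont a b f ->
  (forall x, a < x < b -> derivable_pt_lim f x (df x)) ->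
  (forall x, a < x < b -> K <= df x) -> K * (b - a) <= f b - f a.
Proof.
  intros Hab Hc Hd HK.
  set (g := fun s => f (clamp a b s)).
  assert (Hg : forall c, a < c < b -> derivable_pt_lim g c (df c)).
  { intros c Hc'. apply dpl_local with f (Rmin (c - a) (b - c)).
    apply Rmin_pos; lra.
    intros y Hy. unfold g. rewrite clamp_id; auto.
    assert (Rabs (y - c) < c - a) by (eapply Rlt_le_trans; [exact Hy|apply Rmin_l]).
    assert (Rabs (y - c) < b - c) by (eapply Rlt_le_trans; [exact Hy|apply Rmin_r]).
    revert H H0; unfold Rabs; destruct Rcase_abs; lra.
    apply Hd; auto. }
  pose (pr1 := fun c (H : a < c < b) => exist (fun l => derivable_pt_lim g c l) (df c) (Hg c H)).
  destruct (MVT g id a b pr1 (fun c _ => derivable_pt_id c) Hab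
     (fun c _ => wcont_clamp a b f ltac:(lra) Hc c)
     (fun c _ => derivable_continuous_pt _ _ (derivable_pt_id c))) as [c [Pc Heq]].
  rewrite derive_pt_id in Heq. unfold derive_pt, pr1 in Heq. simpl in Heq.
  unfold id, g in Heq. rewrite !clamp_id in Heq by lra.
  specialize (HK c Pc). nra.
Qed.

Lemma dw_interior a b f s l : a < s < b -> deriv_within a b f s l -> derivable_pt_lim f s l.
Proof.
  intros Hs H e He. destruct (H e He) as [d [Hd Hd']].
  assert (Hp : 0 < Rmin d (Rmin (s - a) (b - s))) by (repeat apply Rmin_pos; lra).
  exists (mkposreal _ Hp). intros h Hh Hhd. simpl in Hhd.
  assert (Rabs h < d) by (eapply Rlt_le_trans; [exact Hhd|apply Rmin_l]).
  assert (Rabs h < s - a) by (eapply Rlt_le_trans; [exact Hhd|eapply Rle_trans; [apply Rmin_r|apply Rmin_l]]).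
  assert (Rabs h < b - s) by (eapply Rlt_le_trans; [exact Hhd|eapply Rle_trans; [apply Rmin_r|apply Rmin_r]]).
  apply Hd'; auto. revert H1 H2; unfold Rabs; destruct Rcase_abs; lra.
Qed.

Lemma dw_wcont a b f : (forall s, a <= s <= b -> exists l, deriv_within a b f s l) -> wcont a b f.
Proof.
  intros H s Hs e He. destruct (H s Hs) as [l Hl].
  destruct (Hl 1 ltac:(lra)) as [d [Hd Hd']].
  assert (Hl0 : 0 < Rabs l + 1) by (pose proof (Rabs_pos l); lra).
  exists (Rmin d (e / (Rabs l + 1))). split.
  apply Rmin_pos; auto. apply Rdiv_lt_0_compat; lra.
  intros s' Hs' Hss.
  destruct (Req_dec s' s) as [->|Hne].
  replace (f s - f s) with 0 by ring. rewrite Rabs_R0; lra.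
  set (h := s' - s).
  assert (Hh : h <> 0) by (unfold h; lra).
  assert (Hhd : Rabs h < d) by (eapply Rlt_le_trans; [exact Hss|apply Rmin_l]).
  assert (Hhe : Rabs h < e / (Rabs l + 1)) by (eapply Rlt_le_trans; [exact Hss|apply Rmin_r]).
  assert (Hin : a <= s + h <= b) by (unfold h; lra).
  specialize (Hd' h Hh Hhd Hin).
  replace (s + h) with s' in Hd' by (unfold h; ring).
  set (q := (f s' - f s) / h) in Hd'.
  assert (Eq : f s' - f s = q * h) by (unfold q; field; auto).
  rewrite Eq, Rabs_mult.
  assert (Rabs q < Rabs l + 1).
  { pose proof (Rabs_triang (q - l) l). replace (q - l + l) with q in H0 by ring. lra. }
  assert (Rabs h * (Rabs l + 1) < e).
  { apply Rmult_lt_compat_r with (r := Rabs l + 1) in Hhe; auto.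
    unfold Rdiv in Hhe. rewrite Rmult_assoc, Rinv_l in Hhe by lra. lra. }
  pose proof (Rabs_pos q). pose proof (Rabs_pos h). nra.
Qed.
Lemma dpl_neg_arg f x l : derivable_pt_lim f (-x) l -> derivable_pt_lim (fun y => f (- y)) x (- l).
Proof.
  intros H e He. destruct (H e He) as [del Hdel]. exists del. intros h Hh Hhd.
  assert (Hh' : -h <> 0) by lra.
  assert (Hhd' : Rabs (-h) < del) by (rewrite Rabs_Ropp; auto).
  specialize (Hdel (-h) Hh' Hhd').
  replace (- (x + h)) with (- x + - h) by ring.
  replace ((f (- x + - h) - f (- x)) / h - - l) with (- ((f (- x + - h) - f (- x)) / - h - l)) by (field; auto).
  rewrite Rabs_Ropp; auto.
Qed.

Lemma dpl_negneg f x l : derivable_pt_lim f (-x) l -> derivable_pt_lim (fun y => - f (- y)) x l.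
Proof.
  intros H. apply dpl_neg_arg in H. intros e He. destruct (H e He) as [del Hdel]. exists del.
  intros h Hh Hhd. specialize (Hdel h Hh Hhd).
  replace ((- f (- (x + h)) - - f (- x)) / h - l) with (- ((f (- (x + h)) - f (- x)) / h - - l)) by (field; auto).
  rewrite Rabs_Ropp; auto.
Qed.

Lemma dw_opp a b f s l : deriv_within a b f s l -> deriv_within a b (fun s => - f s) s (- l).
Proof.
  intros H e He. destruct (H e He) as [d [Hd Hd']]. exists d; split; auto.
  intros h Hh Hhd Hin. specialize (Hd' h Hh Hhd Hin).
  replace ((- f (s + h) - - f s) / h - - l) with (- ((f (s + h) - f s) / h - l)) by (field; auto).
  rewrite Rabs_Ropp; auto.
Qed.

Lemma cont2_neg f x p : cont2 f (-x) (-p) -> cont2 (fun a b => f (-a) (-b)) x p.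
Proof.
  intros H e He. destruct (H e He) as [d [Hd Hd']]. exists d; split; auto.
  intros x' p' H1 H2. apply Hd'.
  replace (- x' - - x) with (- (x' - x)) by ring. rewrite Rabs_Ropp; auto.
  replace (- p' - - p) with (- (p' - p)) by ring. rewrite Rabs_Ropp; auto.
Qed.

Lemma cont2_bound f x0 p0 : cont2 f x0 p0 -> exists d, 0 < d /\
  forall x p, Rabs (x - x0) < d -> Rabs (p - p0) < d -> Rabs (f x p) <= Rabs (f x0 p0) + 1.
Proof.
  intros H. destruct (H 1 ltac:(lra)) as [d [Hd Hd']]. exists d; split; auto.
  intros x p H1 H2. specialize (Hd' x p H1 H2).
  pose proof (Rabs_triang (f x p - f x0 p0) (f x0 p0)).
  replace (f x p - f x0 p0 + f x0 p0) with (f x p) in H0 by ring. lra.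
Qed.

Lemma mvt_abs (G G' : R -> R) a b B :
  (forall z, Rmin a b <= z <= Rmax a b -> derivable_pt_lim G z (G' z) /\ Rabs (G' z) <= B) ->
  Rabs (G a - G b) <= B * Rabs (a - b).
Proof.
  intros H. destruct (Rtotal_order a b) as [Hab|[Hab|Hab]].
  - destruct (MVT_cor2 G G' a b Hab) as [c [Hc Hc']].
    intros c Hc. apply H. rewrite Rmin_left, Rmax_right; lra.
    assert (HB : Rabs (G' c) <= B) by (apply H; rewrite Rmin_left, Rmax_right; lra).
    replace (G a - G b) with (- (G b - G a)) by ring. rewrite Rabs_Ropp, Hc, Rabs_mult.
    replace (a - b) with (- (b - a)) by ring. rewrite Rabs_Ropp.
    apply Rmult_le_compat_r; auto. apply Rabs_pos.
  - subst. replace (G b - G b) with 0 by ring. replace (b - b) with 0 by ring.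
    rewrite Rabs_R0; lra.
  - destruct (MVT_cor2 G G' b a Hab) as [c [Hc Hc']].
    intros c Hc. apply H. rewrite Rmin_right, Rmax_left; lra.
    assert (HB : Rabs (G' c) <= B) by (apply H; rewrite Rmin_right, Rmax_left; lra).
    rewrite Hc, Rabs_mult.
    apply Rmult_le_compat_r; auto. apply Rabs_pos.
Qed.

Lemma last_time f a b : a <= b -> wcont a b f -> 0 <= f a -> f b < 0 ->
  exists c, a <= c < b /\ 0 <= f c /\ forall s, c < s <= b -> f s < 0.
Proof.
  intros Hab Hc Ha Hb.
  set (E := fun s => a <= s <= b /\ 0 <= f s).
  assert (Hbd : bound E) by (exists b; intros s [Hs _]; lra).
  assert (Hne : exists s, E s) by (exists a; split; auto; lra).
  destruct (completeness E Hbd Hne) as [c [Hub Hlub]].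
  assert (Hac : a <= c) by (apply Hub; split; auto; lra).
  assert (Hcb : c <= b) by (apply Hlub; intros s [Hs _]; lra).
  assert (Hfc : 0 <= f c).
  { destruct (Rle_dec 0 (f c)) as [|Hn]; auto. exfalso.
    destruct (Hc c ltac:(lra) (- f c) ltac:(lra)) as [d [Hd Hd']].
    assert (Hup : forall s, E s -> s <= c - d / 2).
    { intros s [Hs Hfs]. destruct (Rle_dec s (c - d/2)); auto.
      assert (s <= c) by (apply Hub; split; auto).
      assert (Rabs (s - c) < d) by (unfold Rabs; destruct Rcase_abs; lra).
      specialize (Hd' s Hs H0). revert Hd'; unfold Rabs; repeat destruct Rcase_abs; lra. }
    assert (c <= c - d / 2) by (apply Hlub; exact Hup). lra. }
  exists c. split; [split; auto|split; auto].
  destruct (Req_dec c b); auto. subst. lra. lra.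
  intros s Hs. destruct (Rlt_dec (f s) 0); auto.
  assert (s <= c) by (apply Hub; split; [lra|lra]). lra.
Qed.

Definition Good (k : Kdom) (H Hx Hp Hxx Hxp Hpx Hpp : R -> R -> R) : Prop :=
  forall x p, inK k x ->
    derivable_pt_lim (fun y => H y p) x (Hx x p) /\
    derivable_pt_lim (fun q => H x q) p (Hp x p) /\
    derivable_pt_lim (fun y => Hx y p) x (Hxx x p) /\
    derivable_pt_lim (fun q => Hx x q) p (Hxp x p) /\
    derivable_pt_lim (fun y => Hp y p) x (Hpx x p) /\
    derivable_pt_lim (fun q => Hp x q) p (Hpp x p) /\
    cont2 Hxx x p /\ cont2 Hxp x p /\ cont2 Hpx x p /\ cont2 Hpp x p /\ 0 < Hpp x p.

Lemma inK_between k a b z : inK k a -> inK k b -> Rmin a b <= z <= Rmax a b -> inK k z.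
Proof.
  destruct k; simpl; auto. unfold Rmin, Rmax; repeat destruct Rle_dec; lra.
Qed.

Lemma inK_max k a b : inK k a -> inK k b -> inK k (Rmax a b).
Proof. destruct k; simpl; auto. unfold Rmax; destruct Rle_dec; lra. Qed.

Lemma Hp_strict k H Hx Hp Hxx Hxp Hpx Hpp : Good k H Hx Hp Hxx Hxp Hpx Hpp ->
  forall x p1 p2, inK k x -> p1 < p2 -> Hp x p1 < Hp x p2.
Proof.
  intros G x p1 p2 Hx0 Hlt.
  destruct (MVT_cor2 (fun q => Hp x q) (Hpp x) p1 p2 Hlt) as [c [Hc Hc']].
  intros c _. apply (G x c Hx0).
  destruct (G x c Hx0) as (_&_&_&_&_&_&_&_&_&_&Hpos).
  simpl in Hc. nra.
Qed.
Lemma between_near a b z c d : Rabs (a - c) < d -> Rabs (b - c) < d ->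
  Rmin a b <= z <= Rmax a b -> Rabs (z - c) < d.
Proof. unfold Rmin, Rmax, Rabs; repeat destruct Rle_dec; repeat destruct Rcase_abs; lra. Qed.

Lemma lip2 k (F Fx Fp : R -> R -> R) x0 p0 d B :
  (forall x p, inK k x -> derivable_pt_lim (fun y => F y p) x (Fx x p) /\
                         derivable_pt_lim (fun q => F x q) p (Fp x p)) ->
  (forall x p, Rabs (x - x0) < d -> Rabs (p - p0) < d -> Rabs (Fx x p) <= B /\ Rabs (Fp x p) <= B) ->
  forall x p x' p', inK k x -> inK k x' -> Rabs (x - x0) < d -> Rabs (p - p0) < d ->
    Rabs (x' - x0) < d -> Rabs (p' - p0) < d ->
    Rabs (F x p - F x' p') <= B * (Rabs (x - x') + Rabs (p - p')).
Proof.
  intros HD HB x p x' p' Hx Hx' H1 H2 H3 H4.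
  assert (A1 : Rabs (F x p - F x' p) <= B * Rabs (x - x')).
  { apply (mvt_abs (fun y => F y p) (fun y => Fx y p)). intros z Hz.
    assert (inK k z) by (apply inK_between with x x'; auto).
    split. apply (HD z p H). apply HB; auto. apply between_near with x x'; auto. }
  assert (A2 : Rabs (F x' p - F x' p') <= B * Rabs (p - p')).
  { apply (mvt_abs (fun q => F x' q) (fun q => Fp x' q)). intros z Hz.
    split. apply (HD x' z Hx'). apply HB; auto. apply between_near with p p'; auto. }
  pose proof (Rabs_triang (F x p - F x' p) (F x' p - F x' p')).
  replace (F x p - F x' p + (F x' p - F x' p')) with (F x p - F x' p') in H by ring. lra.
Qed.

Definition Traj k (Hx Hp : R -> R -> R) t (X P : R -> R) :=
  forall s, 0 <= s <= t -> inK k (X s) /\ deriv_within 0 t X s (Hp (X s) (P s)) /\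
                           deriv_within 0 t P s (- Hx (X s) (P s)).

Lemma Traj_wcont k Hx Hp t X P : Traj k Hx Hp t X P -> wcont 0 t X /\ wcont 0 t P.
Proof.
  intros T. split; apply dw_wcont; intros s Hs; destruct (T s Hs) as (_&A&B); eauto.
Qed.

Lemma rmax3 a b : let m := Rmax (Rmax a 0) (Rmax b 0) in
  a <= m /\ b <= m /\ 0 <= m /\ (b <= a -> 0 < m -> m = a) /\ (a <= b -> 0 < m -> m = b)
  /\ (0 < m -> 0 < a \/ 0 < b) /\ (a <= 0 -> b <= 0 -> m = 0).
Proof. simpl. unfold Rmax; repeat destruct Rle_dec; lra. Qed.

Lemma near_max z w c d : Rabs (z - c) < d -> w <= c -> Rabs (Rmax z w - c) < d.
Proof. unfold Rmax, Rabs; repeat destruct Rle_dec; repeat destruct Rcase_abs; lra. Qed.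

Lemma wcont_V lo hi X P Y Q : wcont lo hi X -> wcont lo hi P ->
  wcont lo hi (fun s => Rmax (Rmax (Y - X s) 0) (Rmax (Q - P s) 0)).
Proof.
  intros HX HP s Hs e He.
  destruct (HX s Hs (e/2) ltac:(lra)) as [d1 [Hd1 H1]].
  destruct (HP s Hs (e/2) ltac:(lra)) as [d2 [Hd2 H2]].
  exists (Rmin d1 d2); split. apply Rmin_pos; auto.
  intros s' Hs' Hss.
  assert (A := H1 s' Hs' ltac:(eapply Rlt_le_trans; [exact Hss|apply Rmin_l])).
  assert (B := H2 s' Hs' ltac:(eapply Rlt_le_trans; [exact Hss|apply Rmin_r])).
  revert A B. unfold Rmax, Rabs; repeat destruct Rle_dec; repeat destruct Rcase_abs; lra.
Qed.
Lemma wcont_mc lo hi f c : wcont lo hi f -> wcont lo hi (fun s => f s - c).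
Proof.
  intros H s Hs e He. destruct (H s Hs e He) as [d [Hd Hd']]. exists d; split; auto.
  intros s' H1 H2. replace (f s' - c - (f s - c)) with (f s' - f s) by ring. auto.
Qed.

Lemma near_mid a b c d : Rabs (a - c) < d -> a <= b <= c -> Rabs (b - c) < d.
Proof. unfold Rabs; repeat destruct Rcase_abs; lra. Qed.

Lemma rmin_lt a b c : a < Rmin b c -> a < b /\ a < c.
Proof. unfold Rmin; destruct Rle_dec; lra. Qed.

Lemma local_inv k H Hx Hp Hxx Hxp Hpx Hpp t X P Y Q :
  Good k H Hx Hp Hxx Hxp Hpx Hpp -> Traj k Hx Hp t X P -> inK k Y ->
  (forall r, Q <= r -> 0 <= Hp Y r) -> (forall z, inK k z -> Y <= z -> 0 <= - Hx z Q) ->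
  forall s0, 0 <= s0 < t -> Y <= X s0 -> Q <= P s0 ->
  exists s1, s0 < s1 <= t /\ forall s, s0 <= s <= s1 -> Y <= X s /\ Q <= P s.
Proof.
  intros G T HY HYp HQx s0 Hs0 HX0 HP0.
  destruct (Traj_wcont _ _ _ _ _ _ T) as [WX WP].
  set (x0 := X s0). set (p0 := P s0).
  assert (HX0' : Y <= x0) by exact HX0. assert (HP0' : Q <= p0) by exact HP0.
  assert (Hx0 : inK k x0) by (apply (T s0); lra).
  destruct (G x0 p0 Hx0) as (_&_&_&_&_&_&C1&C2&C3&C4&_).
  destruct (cont2_bound _ _ _ C1) as [d1 [Hd1 B1]].
  destruct (cont2_bound _ _ _ C2) as [d2 [Hd2 B2]].
  destruct (cont2_bound _ _ _ C3) as [d3 [Hd3 B3]].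
  destruct (cont2_bound _ _ _ C4) as [d4 [Hd4 B4]].
  set (B := Rabs (Hxx x0 p0) + Rabs (Hxp x0 p0) + Rabs (Hpx x0 p0) + Rabs (Hpp x0 p0) + 1).
  set (d := Rmin (Rmin d1 d2) (Rmin d3 d4)).
  assert (Hd : 0 < d) by (repeat apply Rmin_pos; auto).
  pose proof (Rabs_pos (Hxx x0 p0)). pose proof (Rabs_pos (Hxp x0 p0)).
  pose proof (Rabs_pos (Hpx x0 p0)). pose proof (Rabs_pos (Hpp x0 p0)).
  assert (HB : 1 <= B) by (unfold B; lra).
  assert (Bnd : forall x p, Rabs (x - x0) < d -> Rabs (p - p0) < d ->
     Rabs (Hxx x p) <= B /\ Rabs (Hxp x p) <= B /\ Rabs (Hpx x p) <= B /\ Rabs (Hpp x p) <= B).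
  { intros x p Ha Hb. unfold d in Ha, Hb.
    destruct (rmin_lt _ _ _ Ha) as [Ha1 Ha2]. destruct (rmin_lt _ _ _ Hb) as [Hb1 Hb2].
    destruct (rmin_lt _ _ _ Ha1). destruct (rmin_lt _ _ _ Ha2).
    destruct (rmin_lt _ _ _ Hb1). destruct (rmin_lt _ _ _ Hb2).
    specialize (B1 x p H4 H8). specialize (B2 x p H5 H9).
    specialize (B3 x p H6 H10). specialize (B4 x p H7 H11). unfold B; lra. }
  assert (LipP : forall x p x' p', inK k x -> inK k x' -> Rabs (x - x0) < d -> Rabs (p - p0) < d ->
    Rabs (x' - x0) < d -> Rabs (p' - p0) < d -> Rabs (Hp x p - Hp x' p') <= B * (Rabs (x - x') + Rabs (p - p'))).
  { apply lip2 with (Fx := Hpx) (Fp := Hpp).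
    intros x p Hx1; destruct (G x p Hx1) as (_&_&_&_&a&b&_); auto.
    intros x p Ha Hb; destruct (Bnd x p Ha Hb) as (_&_&a&b); auto. }
  assert (LipX : forall x p x' p', inK k x -> inK k x' -> Rabs (x - x0) < d -> Rabs (p - p0) < d ->
    Rabs (x' - x0) < d -> Rabs (p' - p0) < d -> Rabs (Hx x p - Hx x' p') <= B * (Rabs (x - x') + Rabs (p - p'))).
  { apply lip2 with (Fx := Hxx) (Fp := Hxp).
    intros x p Hx1; destruct (G x p Hx1) as (_&_&a&b&_); auto.
    intros x p Ha Hb; destruct (Bnd x p Ha Hb) as (a&b&_); auto. }
  destruct (WX s0 ltac:(lra) d Hd) as [dx [Hdx WX0]].
  destruct (WP s0 ltac:(lra) d Hd) as [dp [Hdp WP0]].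
  assert (HiB : 0 < / (4 * B)) by (apply Rinv_0_lt_compat; lra).
  set (del := Rmin (Rmin dx dp / 2) (/ (4 * B))).
  assert (Hdel : 0 < del) by (apply Rmin_pos; [pose proof (Rmin_pos dx dp Hdx Hdp); lra| lra]).
  assert (Hdel1 : del <= Rmin dx dp / 2) by apply Rmin_l.
  assert (Hdel2 : del <= / (4 * B)) by apply Rmin_r.
  assert (Hdxp1 : Rmin dx dp <= dx) by apply Rmin_l.
  assert (Hdxp2 : Rmin dx dp <= dp) by apply Rmin_r.
  set (s1 := Rmin t (s0 + del)).
  assert (Hs1a : s1 <= t) by apply Rmin_l.
  assert (Hs1b : s1 <= s0 + del) by apply Rmin_r.
  assert (Hs1c : s0 < s1) by (unfold s1, Rmin; destruct Rle_dec; lra).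
  assert (Hs1' : 4 * B * (s1 - s0) <= 1).
  { assert (Hq4 : 4 * B * (s1 - s0) <= 4 * B * / (4 * B)) by (apply Rmult_le_compat_l; lra).
    rewrite Rinv_r in Hq4 by lra. lra. }
  assert (Near : forall s, s0 <= s <= s1 -> Rabs (X s - x0) < d /\ Rabs (P s - p0) < d).
  { intros s Hs. assert (Rabs (s - s0) < dx /\ Rabs (s - s0) < dp) by
      (unfold Rabs; destruct Rcase_abs; split; lra).
    split; [apply WX0|apply WP0]; tauto || lra. }
  exists s1. split; [lra|].
  intros s Hs. apply NNPP; intro Hfail.
  set (V := fun s => Rmax (Rmax (Y - X s) 0) (Rmax (Q - P s) 0)).
  assert (WV : wcont s0 s1 V) by (apply wcont_V; eapply wcont_sub; eauto; lra).
  destruct (wcont_max s0 s1 V ltac:(lra) WV) as [r [Hr Hrmax]].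
  set (m := V r).
  assert (Vle : forall s, s0 <= s <= s1 -> Y - X s <= m /\ Q - P s <= m).
  { intros s' Hs'. specialize (Hrmax s' Hs').
    destruct (rmax3 (Y - X s') (Q - P s')) as (a&b&_). simpl in a, b.
    change (Rmax (Rmax (Y - X s') 0) (Rmax (Q - P s') 0)) with (V s') in a, b. fold m in Hrmax. lra. }
  assert (Hm : 0 < m).
  { destruct (Vle s Hs). destruct (Rle_dec Y (X s)); destruct (Rle_dec Q (P s)); try tauto; lra. }
  destruct (rmax3 (Y - X r) (Q - P r)) as (_&_&_&Ea&Eb&_). simpl in Ea, Eb. change (Rmax (Rmax (Y - X r) 0) (Rmax (Q - P r) 0)) with m in Ea, Eb.
  destruct (Rle_dec (Q - P r) (Y - X r)) as [Hc|Hc].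
  - specialize (Ea Hc Hm).
    destruct (last_time (fun s => X s - Y) s0 r) as [c [Hc1 [Hc2 Hc3]]]; try lra.
    { apply wcont_mc. eapply wcont_sub; eauto; lra. }
    assert (Hmvt : (- (2 * B * m)) * (r - c) <= X r - X c).
    { apply mvt_lb with (df := fun s => Hp (X s) (P s)). lra.
      eapply wcont_sub; eauto; lra.
      intros z Hz. apply dw_interior with 0 t. lra. apply (T z); lra.
      intros z Hz. assert (HzX := Hc3 z ltac:(lra)). simpl in HzX.
      assert (Hz' : s0 <= z <= s1) by lra.
      destruct (Near z Hz') as [N1 N2]. destruct (Vle z Hz') as [V1 V2].
      assert (HzK : inK k (X z)) by (apply (T z); lra).
      set (Pb := Rmax (P z) Q).
      assert (Hq : Q <= Pb) by apply Rmax_r.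
      assert (NY : Rabs (Y - x0) < d) by (apply near_mid with (X z); [exact N1|split; lra]).
      assert (NPb : Rabs (Pb - p0) < d) by (apply near_max; auto).
      assert (L := LipP (X z) (P z) Y Pb HzK HY N1 N2 NY NPb).
      assert (E1 : Rabs (X z - Y) <= m) by (unfold Rabs; destruct Rcase_abs; lra).
      assert (E2 : Rabs (P z - Pb) <= m) by (unfold Pb, Rmax, Rabs; destruct Rle_dec; destruct Rcase_abs; lra).
      assert (B * (Rabs (X z - Y) + Rabs (P z - Pb)) <= B * (2 * m)) by (apply Rmult_le_compat_l; lra).
      specialize (HYp Pb Hq).
      revert L; unfold Rabs at 1; destruct Rcase_abs; lra. }
    assert (Hbm : 0 <= B * m) by nra.
    assert (Hq1 : B * m * (r - c) <= B * m * (s1 - s0)) by (apply Rmult_le_compat_l; lra).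
    assert (Hq2 : m * (4 * B * (s1 - s0)) <= m * 1) by (apply Rmult_le_compat_l; lra).
    nra.
  - assert (Eb' := Eb ltac:(lra) Hm).
    destruct (last_time (fun s => P s - Q) s0 r) as [c [Hc1 [Hc2 Hc3]]]; try lra.
    { apply wcont_mc. eapply wcont_sub; eauto; lra. }
    assert (Hmvt : (- (2 * B * m)) * (r - c) <= P r - P c).
    { apply mvt_lb with (df := fun s => - Hx (X s) (P s)). lra.
      eapply wcont_sub; eauto; lra.
      intros z Hz. apply dw_interior with 0 t. lra. apply (T z); lra.
      intros z Hz. assert (HzP := Hc3 z ltac:(lra)). simpl in HzP.
      assert (Hz' : s0 <= z <= s1) by lra.
      destruct (Near z Hz') as [N1 N2]. destruct (Vle z Hz') as [V1 V2].
      assert (HzK : inK k (X z)) by (apply (T z); lra).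
      set (Xb := Rmax (X z) Y).
      assert (Hq : Y <= Xb) by apply Rmax_r.
      assert (HXb : inK k Xb) by (apply inK_max; auto).
      assert (NXb : Rabs (Xb - x0) < d) by (apply near_max; auto).
      assert (NQ : Rabs (Q - p0) < d) by (apply near_mid with (P z); [exact N2|split; lra]).
      assert (L := LipX (X z) (P z) Xb Q HzK HXb N1 N2 NXb NQ).
      assert (E1 : Rabs (X z - Xb) <= m) by (unfold Xb, Rmax, Rabs; destruct Rle_dec; destruct Rcase_abs; lra).
      assert (E2 : Rabs (P z - Q) <= m) by (unfold Rabs; destruct Rcase_abs; lra).
      assert (B * (Rabs (X z - Xb) + Rabs (P z - Q)) <= B * (2 * m)) by (apply Rmult_le_compat_l; lra).
      specialize (HQx Xb HXb Hq).
      revert L; unfold Rabs at 1; destruct Rcase_abs; lra. }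
    assert (Hbm : 0 <= B * m) by nra.
    assert (Hq1 : B * m * (r - c) <= B * m * (s1 - s0)) by (apply Rmult_le_compat_l; lra).
    assert (Hq2 : m * (4 * B * (s1 - s0)) <= m * 1) by (apply Rmult_le_compat_l; lra).
    nra.
Qed.
Lemma closed_left f lo hi s0 sg c : wcont lo hi f -> lo <= s0 <= sg -> sg <= hi ->
  c <= f s0 -> (forall r, s0 <= r < sg -> c <= f r) -> c <= f sg.
Proof.
  intros W H1 H2 H3 H4. destruct (Rle_dec c (f sg)) as [|Hn]; auto. exfalso.
  destruct (Req_dec sg s0) as [->|Hne]; [lra|].
  destruct (W sg ltac:(lra) (c - f sg) ltac:(lra)) as [d [Hd Hd']].
  set (r := Rmax s0 (sg - d / 2)).
  assert (Hr1 : s0 <= r) by apply Rmax_l.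
  assert (Hr2 : sg - d/2 <= r) by apply Rmax_r.
  assert (Hr3 : r < sg) by (unfold r, Rmax; destruct Rle_dec; lra).
  specialize (H4 r ltac:(lra)).
  assert (Rabs (r - sg) < d) by (unfold Rabs; destruct Rcase_abs; lra).
  specialize (Hd' r ltac:(lra) H).
  revert Hd'; unfold Rabs; destruct Rcase_abs; lra.
Qed.

Lemma global_inv k H Hx Hp Hxx Hxp Hpx Hpp t X P Y Q :
  Good k H Hx Hp Hxx Hxp Hpx Hpp -> Traj k Hx Hp t X P -> inK k Y ->
  (forall r, Q <= r -> 0 <= Hp Y r) -> (forall z, inK k z -> Y <= z -> 0 <= - Hx z Q) ->
  forall s0, 0 <= s0 <= t -> Y <= X s0 -> Q <= P s0 ->
  forall s, s0 <= s <= t -> Y <= X s /\ Q <= P s.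
Proof.
  intros G T HY HYp HQx s0 Hs0 HX0 HP0.
  destruct (Traj_wcont _ _ _ _ _ _ T) as [WX WP].
  set (E := fun s => s0 <= s <= t /\ forall r, s0 <= r <= s -> Y <= X r /\ Q <= P r).
  assert (Hbd : bound E) by (exists t; intros s [Hs _]; lra).
  assert (Hne : exists s, E s).
  { exists s0; split; [lra|]. intros r Hr. replace r with s0 by lra. auto. }
  destruct (completeness E Hbd Hne) as [sg [Hub Hlub]].
  assert (Hsg1 : s0 <= sg) by (apply Hub; destruct Hne as [s' Hs']; split; [lra|];
     intros r Hr; replace r with s0 by lra; auto).
  assert (Hsg2 : sg <= t) by (apply Hlub; intros s [Hs _]; lra).
  assert (A : forall r, s0 <= r < sg -> Y <= X r /\ Q <= P r).
  { intros r Hr. destruct (classic (exists s, E s /\ r < s)) as [[s [[Hs1 Hs2] Hrs]]|Hn].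
    apply Hs2; lra.
    assert (sg <= r). { apply Hlub. intros s Es. destruct (Rle_dec s r); auto.
      exfalso; apply Hn; exists s; split; auto; lra. } lra. }
  assert (Bsg : Y <= X sg /\ Q <= P sg).
  { split.
    apply (closed_left X 0 t s0 sg Y); auto; try lra. intros r Hr; apply A; auto.
    apply (closed_left P 0 t s0 sg Q); auto; try lra. intros r Hr; apply A; auto. }
  assert (Hsgt : sg = t).
  { destruct (Req_dec sg t); auto. exfalso.
    destruct (local_inv k H Hx Hp Hxx Hxp Hpx Hpp t X P Y Q G T HY HYp HQx sg ltac:(lra)
                (proj1 Bsg) (proj2 Bsg)) as [s1 [Hs1 Hs1']].
    assert (E s1).
    { split; [lra|]. intros r Hr. destruct (Rlt_dec r sg). apply A; lra.
      apply Hs1'; lra. }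
    specialize (Hub s1 H1). lra. }
  intros s Hs. destruct (Rlt_dec s sg). apply A; lra. replace s with sg by lra. auto.
Qed.

Lemma deriv_zero_min f m l : derivable_pt_lim f m l -> (forall p, f m <= f p) -> l = 0.
Proof.
  intros Hd Hm. pose (pr := exist (fun l => derivable_pt_lim f m l) l Hd).
  rewrite <- (derive_pt_eq_0 f m l pr Hd).
  apply deriv_minimum with (m - 1) (m + 1); try lra. intros; apply Hm.
Qed.

Lemma core k H Hx Hp Hxx Hxp Hpx Hpp :
  Good k H Hx Hp Hxx Hxp Hpx Hpp ->
  (forall x, inKint k x -> exists m, is_argmin H x m) ->
  (forall M, exists a, inKint k a /\ forall x q, near_dplus k a x -> is_argmin H x q -> M < q) ->
  (forall u, lt_dplus k u -> exists Y Q, u < Y /\ inKint k Y /\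
       (forall r, Q <= r -> 0 <= Hp Y r) /\ (forall z, inK k z -> Y <= z -> 0 <= - Hx z Q)) ->
  forall u, lt_dplus k u -> exists w, u <= w /\ lt_dplus k w /\
   forall v, w < v -> forall t X P, 0 <= t -> Traj k Hx Hp t X P -> X 0 < v -> X t < u ->
     forall s, 0 <= s <= t -> X s < v.
Proof.
  intros G S3 S4 S5 u Hu.
  destruct (S5 u Hu) as (Y & Q & HuY & HYi & HYp & HQx).
  destruct (S4 Q) as (a & Hai & Ha).
  assert (HYK : inK k Y) by (destruct k; simpl in *; lra).
  set (w := Rmax (Rmax a Y) u).
  assert (Hw1 : a <= w /\ Y <= w /\ u <= w) by (unfold w, Rmax; repeat destruct Rle_dec; lra).
  assert (HpQ1 : forall x, inK k x -> a < x -> lt_dplus k x -> Hp x Q < 0).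
  { intros x HxK Hax Hxd.
    assert (Hxi : inKint k x) by (destruct k; simpl in *; lra).
    destruct (S3 x Hxi) as [m Hm].
    assert (HQm : Q < m) by (apply (Ha x m); auto; destruct k; simpl in *; lra).
    assert (Hp x m = 0).
    { apply deriv_zero_min with (fun q => H x q) m. apply (G x m HxK). exact Hm. }
    pose proof (Hp_strict _ _ _ _ _ _ _ _ G x Q m HxK HQm). lra. }
  assert (HpQ : forall x, inK k x -> a < x -> Hp x Q <= 0).
  { intros x HxK Hax. destruct k.
    - left; apply HpQ1; simpl; auto.
    - destruct (Rlt_dec x 1) as [Hx1|Hx1]. left; apply HpQ1; simpl; auto.
      simpl in HxK. assert (x = 1) by lra. subst x.
      destruct (Rle_dec (Hp 1 Q) 0) as [|Hn]; auto. exfalso.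
      destruct (G 1 Q HxK) as (_&_&_&_&D&_).
      assert (Cn := derivable_continuous_pt _ _ (exist _ _ D)).
      unfold continuity_pt, continue_in, limit1_in, limit_in in Cn.
      destruct (Cn (Hp 1 Q) ltac:(lra)) as [alp [Halp Hc]].
      simpl in Hai. simpl in Hc. unfold R_dist in Hc.
      set (x' := Rmax ((a + 1) / 2) (1 - alp / 2)).
      assert (Hx'1 : (a+1)/2 <= x') by apply Rmax_l.
      assert (Hx'2 : 1 - alp/2 <= x') by apply Rmax_r.
      assert (Hx'3 : x' < 1) by (unfold x', Rmax; destruct Rle_dec; lra).
      assert (Hne : x' <> 1) by lra.
      assert (Hdist : Rabs (x' - 1) < alp) by (unfold Rabs; destruct (Rcase_abs (x' - 1)); lra).
      assert (HD : D_x no_cond 1 x') by (split; [exact I| exact (not_eq_sym Hne)]).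
      specialize (Hc x' (conj HD Hdist)).
      assert (Hlt := HpQ1 x' ltac:(simpl; lra) ltac:(lra) ltac:(simpl; lra)).
      revert Hc; unfold Rabs; destruct Rcase_abs; lra. }
  exists w. split; [lra|]. split.
  { destruct k; simpl in *; auto. unfold w, Rmax; repeat destruct Rle_dec; lra. }
  intros v Hwv t X P Ht T HX0 HXt s Hs.
  destruct (Rlt_dec (X s) v) as [|Hn]; auto. exfalso.
  destruct (Traj_wcont _ _ _ _ _ _ T) as [WX WP].
  destruct (wcont_max 0 t X Ht WX) as [ss [Hss Hmax]].
  assert (Hv : v <= X ss) by (specialize (Hmax s Hs); lra).
  assert (Hss0 : 0 < ss) by (destruct (Req_dec ss 0) as [E|E]; [subst; lra|lra]).
  assert (Hsst : ss < t) by (destruct (Req_dec ss t) as [E|E]; [subst; lra|lra]).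
  destruct (T ss ltac:(lra)) as (HK & DX & DP).
  assert (Dl := dw_interior 0 t X ss _ ltac:(lra) DX).
  assert (Hz : Hp (X ss) (P ss) = 0).
  { pose (pr := exist (fun l => derivable_pt_lim X ss l) _ Dl).
    rewrite <- (derive_pt_eq_0 X ss _ pr Dl).
    apply deriv_maximum with 0 t; try lra. intros; apply Hmax; lra. }
  assert (HQ0 := HpQ (X ss) HK ltac:(lra)).
  assert (HQP : Q <= P ss).
  { destruct (Rle_dec Q (P ss)) as [|Hn2]; auto.
    pose proof (Hp_strict _ _ _ _ _ _ _ _ G (X ss) (P ss) Q HK ltac:(lra)). lra. }
  destruct (global_inv k H Hx Hp Hxx Hxp Hpx Hpp t X P Y Q G T HYK HYp HQx ss ltac:(lra)
     ltac:(lra) HQP t ltac:(lra)) as [HYt _].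
  lra.
Qed.
Lemma argmin_exists k H Hx Hp Hxx Hxp Hpx Hpp : Good k H Hx Hp Hxx Hxp Hpx Hpp ->
  (forall x, inK k x -> H x 0 = 0) -> H3 k H -> forall x, inKint k x -> exists m, is_argmin H x m.
Proof.
  intros G Hz0 [H3a _] x Hxi.
  assert (HxK : inK k x) by (destruct k; simpl in *; lra).
  assert (Cc : compact_in_int k (fun c => x <= c <= x)).
  { split. apply compact_P3. intros c Hc. replace c with x by lra. auto. }
  destruct (H3a _ Cc 1) as [R0 HR0].
  set (R1 := Rabs R0 + 1).
  assert (HR1 : 0 < R1 /\ R0 < R1) by (unfold R1, Rabs; destruct Rcase_abs; lra).
  destruct (continuity_ab_min (fun q => H x q) (-R1) R1) as [m [Hm Hm']]. lra.
  { intros c _. apply derivable_continuous_pt. exists (Hp x c). apply (G x c HxK). }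
  exists m. intros p. destruct (Rle_dec (Rabs p) R1) as [Hp1|Hp1].
  - apply Hm. revert Hp1; unfold Rabs; destruct Rcase_abs; lra.
  - assert (HR0p : R0 < Rabs p) by lra.
    specialize (HR0 p x HR0p ltac:(lra)).
    assert (Hpos : 0 < Rabs p) by lra.
    assert (Hle : Rabs p <= H x p).
    { replace (H x p) with (H x p / Rabs p * Rabs p) by (field; lra). nra. }
    specialize (Hm 0 ltac:(lra)). simpl in Hm. rewrite Hz0 in Hm by auto. lra.
Qed.

Lemma inK_neg k x : inK k x -> inK k (- x).
Proof. destruct k; simpl; auto; lra. Qed.
Lemma inKint_neg k x : inKint k x -> inKint k (- x).
Proof. destruct k; simpl; auto; lra. Qed.

Theorem mainTheorem11 (k : Kdom) (H : R -> R -> R) (hH : condH k H)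
  (u : R) (hu0 : 0 < u) (hu1 : lt_dplus k u) :
  exists v, u < v /\ lt_dplus k v /\
    forall (t x p : R) (X P : R -> R),
      0 <= t -> -v < x < v ->
      hamilton_sol k H t X P -> X 0 = x -> P 0 = p ->
      -u < X t < u ->
      forall s, 0 <= s <= t -> -v < X s < v.
Proof.
  destruct hH as (Hz0 & H1' & _ & H3' & [H4a H4b] & [H5a H5b]).
  destruct H1' as (eps & Heps & Hx & Hp & Hxx & Hxp & Hpx & Hpp & C2 & Hpos).
  assert (G : Good k H Hx Hp Hxx Hxp Hpx Hpp).
  { intros x p HxK. assert (Hs : strip k eps x) by (destruct k; simpl in *; auto; lra).
    destruct (C2 x p Hs) as (d1&d2&d3&d4&d5&d6&_&_&_&c4&c5&c6&c7).
    repeat split; auto. apply Hpos; auto. }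
  set (H' := fun x p => H (-x) (-p)).
  set (Hx' := fun x p => - Hx (-x) (-p)).
  set (Hp' := fun x p => - Hp (-x) (-p)).
  set (Hxx' := fun x p => Hxx (-x) (-p)).
  set (Hxp' := fun x p => Hxp (-x) (-p)).
  set (Hpx' := fun x p => Hpx (-x) (-p)).
  set (Hpp' := fun x p => Hpp (-x) (-p)).
  assert (G' : Good k H' Hx' Hp' Hxx' Hxp' Hpx' Hpp').
  { intros x p HxK. destruct (G (-x) (-p) (inK_neg _ _ HxK)) as (d1&d2&d3&d4&d5&d6&c1&c2&c3&c4&pos).
    split. exact (dpl_neg_arg (fun y => H y (-p)) x _ d1).
    split. exact (dpl_neg_arg (fun q => H (-x) q) p _ d2).
    split. exact (dpl_negneg (fun y => Hx y (-p)) x _ d3).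
    split. exact (dpl_negneg (fun q => Hx (-x) q) p _ d4).
    split. exact (dpl_negneg (fun y => Hp y (-p)) x _ d5).
    split. exact (dpl_negneg (fun q => Hp (-x) q) p _ d6).
    split. exact (cont2_neg Hxx x p c1).
    split. exact (cont2_neg Hxp x p c2).
    split. exact (cont2_neg Hpx x p c3).
    split. exact (cont2_neg Hpp x p c4).
    exact pos. }
  assert (S3 := argmin_exists k H Hx Hp Hxx Hxp Hpx Hpp G Hz0 H3').
  assert (S3' : forall x, inKint k x -> exists m, is_argmin H' x m).
  { intros x Hx1. destruct (S3 (-x) (inKint_neg _ _ Hx1)) as [m Hm].
    exists (-m). intros q. unfold H'. rewrite Ropp_involutive.
    apply Hm. }
  assert (S4' : forall M, exists a, inKint k a /\ forall x q, near_dplus k a x -> is_argmin H' x q -> M < q).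
  { intros M. destruct (H4a M) as [a [Ha Ha']]. exists (-a). split.
    apply inKint_neg; auto.
    intros x q Hn Hq.
    assert (Hq' : is_argmin H (-x) (-q)).
    { intros p'. specialize (Hq (-p')). unfold H' in Hq. rewrite Ropp_involutive in Hq. exact Hq. }
    assert (Hn' : near_dminus k a (-x)) by (destruct k; simpl in *; lra).
    specialize (Ha' _ _ Hn' Hq'). lra. }
  assert (S5 : forall u, lt_dplus k u -> exists Y Q, u < Y /\ inKint k Y /\
       (forall r, Q <= r -> 0 <= Hp Y r) /\ (forall z, inK k z -> Y <= z -> 0 <= - Hx z Q)).
  { intros u0 Hu0. destruct H5a as (y & q & Hyq & Hcv & _ & Hd1 & Hd2).
    assert (Hn : exists n, u0 < y n).
    { destruct k; simpl in Hcv.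
      - destruct (Hcv u0) as [N HN]. exists N. apply HN. lia.
      - simpl in Hu0. destruct (Hcv (1 - u0) ltac:(lra)) as [N HN]. exists N.
        specialize (HN N ltac:(lia)). unfold R_dist in HN. revert HN; unfold Rabs; destruct Rcase_abs; lra. }
    destruct Hn as [n Hn]. exists (y n), (q n).
    destruct (Hyq n) as [Hyi _].
    assert (HyK : inK k (y n)) by (destruct k; simpl in *; lra).
    split; auto. split; auto. split.
    - intros r Hr. destruct (G (y n) r HyK) as (_&d2&_).
      specialize (Hd1 n r _ Hr d2). lra.
    - intros z Hz Hyz. destruct (G z (q n) Hz) as (d1&_).
      specialize (Hd2 n z _ Hz Hyz d1). lra. }
  assert (S5' : forall u, lt_dplus k u -> exists Y Q, u < Y /\ inKint k Y /\
       (forall r, Q <= r -> 0 <= Hp' Y r) /\ (forall z, inK k z -> Y <= z -> 0 <= - Hx' z Q)).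
  { intros u0 Hu0. destruct H5b as (y & q & Hyq & Hcv & _ & Hd1 & Hd2).
    assert (Hn : exists n, u0 < - y n).
    { destruct k; simpl in Hcv.
      - destruct (Hcv u0) as [N HN]. exists N. apply HN. lia.
      - simpl in Hu0. destruct (Hcv (1 - u0) ltac:(lra)) as [N HN]. exists N.
        specialize (HN N ltac:(lia)). unfold R_dist in HN. revert HN; unfold Rabs; destruct Rcase_abs; lra. }
    destruct Hn as [n Hn]. exists (- y n), (- q n).
    destruct (Hyq n) as [Hyi _].
    assert (HyK : inK k (y n)) by (destruct k; simpl in *; lra).
    split; auto. split. apply inKint_neg; auto. split.
    - intros r Hr. unfold Hp'. rewrite Ropp_involutive. destruct (G (y n) (-r) HyK) as (_&d2&_).
      specialize (Hd1 n (-r) _ ltac:(lra) d2). lra.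
    - intros z Hz Hyz. unfold Hx'. rewrite !Ropp_involutive.
      destruct (G (-z) (q n) (inK_neg _ _ Hz)) as (d1&_).
      specialize (Hd2 n (-z) _ (inK_neg _ _ Hz) ltac:(lra) d1). lra. }
  destruct (core k H Hx Hp Hxx Hxp Hpx Hpp G S3 H4b S5 u hu1) as (w1 & Hw1 & Hw1d & P1).
  destruct (core k H' Hx' Hp' Hxx' Hxp' Hpx' Hpp' G' S3' S4' S5' u hu1) as (w2 & Hw2 & Hw2d & P2).
  set (v := match k with KR => Rmax w1 w2 + 1 | KI => (Rmax w1 w2 + 1) / 2 end).
  assert (Hv : w1 < v /\ w2 < v /\ lt_dplus k v).
  { unfold v; destruct k; simpl in *; unfold Rmax; destruct Rle_dec; repeat split; auto; lra. }
  exists v. split; [lra|]. split; [tauto|].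
  intros t x p X P Ht Hx0 Hsol HX0 HP0 HXt s Hs.
  assert (T1 : Traj k Hx Hp t X P).
  { intros s' Hs'. destruct (Hsol s' Hs') as (HK & a & b & DX & DP & Ha & Hb).
    destruct (G (X s') (P s') HK) as (d1&d2&_).
    assert (Ea := uniqueness_limite _ _ _ _ Ha d2).
    assert (Eb := uniqueness_limite _ _ _ _ Hb d1).
    split; auto. split. rewrite <- Ea; auto.
    replace (- Hx (X s') (P s')) with b by lra. auto. }
  assert (T2 : Traj k Hx' Hp' t (fun s => - X s) (fun s => - P s)).
  { intros s' Hs'. destruct (T1 s' Hs') as (HK & DX & DP).
    split. apply inK_neg; auto. split.
    - assert (E := dw_opp _ _ _ _ _ DX). unfold Hp'. rewrite !Ropp_involutive. exact E.
    - assert (E := dw_opp _ _ _ _ _ DP). rewrite Ropp_involutive in E.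
      unfold Hx'. rewrite !Ropp_involutive. exact E. }
  assert (A1 := P1 v (proj1 Hv) t X P Ht T1 ltac:(lra) ltac:(lra) s Hs).
  assert (A2 := P2 v (proj1 (proj2 Hv)) t _ _ Ht T2 ltac:(simpl; lra) ltac:(simpl; lra) s Hs).
  simpl in A2. lra.
Qed.
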